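(* Let $p$ be an odd prime and $\chi$ a Dirichlet character with odd conductor $f$. Define $c_n=\sum_{i=0}^n\binom ni(-1)^{n-i}\epsilon_{i,\chi}$ for $n\ge0$. Then $|c_n|_p\le|p^n|_p$ for all $n\geq0$.
   Context: $|\cdot|_p$ is the $p$-adic absolute value with $|p|_p=p^{-1}$ (extended to $\overline{\mathbb Q}_p$). For a primitive Dirichlet character $\psi$ of odd conductor $f_\psi$, $E_{n,\psi}$ is defined by $2\sum_{a=1}^{f_\psi}\frac{(-1)^a\psi(a)e^{at}}{e^{f_\psi t}+1}=\sum_{n\ge0}E_{n,\psi}\frac{t^n}{n!}$. Let $\omega$ be the Teichmüller character mod $p$. For $n\ge0$, $\chi_n$ is the primitive Dirichlet character associated with $a\mapsto\chi(a)\omega^{-n}(a)$ on $(\mathbb Z/\mathrm{lcm}(f,p)\mathbb Z)^\times$, and $\epsilon_{n,\chi}=(1-\chi_n(p)p^n)E_{n,\chi_n}$. *)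

(* Defs.v *)
From HB Require Import structures.
From mathcomp Require Import all_boot all_order all_algebra.
Set Implicit Arguments. Unset Strict Implicit. Unset Printing Implicit Defensive.
Import Order.TTheory GRing.Theory Num.Theory.
Local Open Scope ring_scope.

Section Defs.
Variables (R : realFieldType) (K : fieldType).

(* v is an absolute value on K extending the p-adic absolute value |.|_p
   of Q (normalised by |p|_p = p^-1); e.g. K = Qbar_p or C_p. *)
Definition padic_abs (p : nat) (v : K -> R) : Prop :=
  [/\ forall x, 0 <= v x,
      forall x, (v x == 0) = (x == 0),
      forall x y, v (x * y) = v x * v y,
      forall x y, v (x + y) <= Num.max (v x) (v y)
    & v p%:R = (p%:R)^-1].

Definition dirichlet_char (m : nat) (chi : nat -> K) : Prop :=
  [/\ (0 < m)%N,
      forall a, chi (a + m)%N = chi a,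
      forall a b, chi (a * b)%N = chi a * chi b,
      chi 1%N = 1
    & forall a, (chi a == 0) = ~~ coprime a m].

Definition primitive_char (f : nat) (chi : nat -> K) : Prop :=
  dirichlet_char f chi /\
  forall d : nat, (d %| f)%N -> (d < f)%N ->
    exists a b, [/\ coprime a f, coprime b f, (a = b %[mod d])%N & chi a != chi b].

Definition teichmuller (p : nat) (v : K -> R) (omega : nat -> K) : Prop :=
  dirichlet_char p omega /\
  forall a, ~~ (p %| a)%N -> v (omega a - a%:R) < 1.

(* Generalized Euler numbers E_{n,psi} for psi of (odd) conductor f, defined by
   2 sum_{a=1}^f (-1)^a psi(a) e^{at}/(e^{ft}+1) = sum_n E_{n,psi} t^n/n!.
   Comparing coefficients of t^n/n! in
   (e^{ft}+1) * sum_n E_n t^n/n! = 2 sum_{a=1}^f (-1)^a psi(a) e^{at}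
   gives  2 E_n + sum_{k<n} C(n,k) f^(n-k) E_k = 2 sum_a (-1)^a psi(a) a^n,
   which determines the E_n recursively; gen_euler_list n = [:: E_0; ...; E_n]. *)
Definition euler_rhs (f : nat) (psi : nat -> K) (n : nat) : K :=
  \sum_(1 <= a < f.+1) (-1) ^+ a * psi a * (a%:R ^+ n).

Fixpoint gen_euler_list (f : nat) (psi : nat -> K) (n : nat) : seq K :=
  match n with
  | 0 => [:: euler_rhs f psi 0]
  | m.+1 =>
      let s := gen_euler_list f psi m in
      rcons s (euler_rhs f psi m.+1 -
               2^-1 * \sum_(k < m.+1) 'C(m.+1, k)%:R * f%:R ^+ (m.+1 - k) * s`_k)
  end.

Definition gen_euler (f : nat) (psi : nat -> K) (n : nat) : K :=
  (gen_euler_list f psi n)`_n.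

(* epsilon_{n,chi} = (1 - chi_n(p) p^n) E_{n,chi_n}, where chi_n (of conductor fn)
   is the primitive character attached to chi * omega^{-n} *)
Definition eps_char (p fn : nat) (chin : nat -> K) (n : nat) : K :=
  (1 - chin p * p%:R ^+ n) * gen_euler fn chin n.

End Defs.

(* Main.v *)
Require Import Defs.
From HB Require Import structures.
From mathcomp Require Import all_boot all_order all_algebra all_fingroup all_solvable.
From mathcomp Require Import ring lra zify.
Set Implicit Arguments. Unset Strict Implicit. Unset Printing Implicit Defensive.
Import Order.TTheory GRing.Theory Num.Theory.
Local Open Scope ring_scope.
Definition conv {K : fieldType} (A B : nat -> K) (n : nat) : K :=
  \sum_(k < n.+1) 'C(n, k)%:R * A k * B (n - k)%N.

Lemma binC_aux n i j : (j + i <= n)%N ->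
  ('C(n, j + i) * 'C(j + i, i) = 'C(n, i) * 'C(n - i, j))%N.
Proof.
move=> h.
have H1 := bin_fact h.
have H2 := bin_fact (leq_addl j i).
have hi : (i <= n)%N by apply: leq_trans h; apply: leq_addl.
have H3 := bin_fact hi.
have hj : (j <= n - i)%N by rewrite leq_subRL // addnC.
have H4 := bin_fact hj.
have pos : (0 < i`! * j`! * (n - (j + i))`!)%N by rewrite !muln_gt0 !fact_gt0.
apply/eqP; rewrite -(eqn_pmul2r pos).
have e1 : (j + i - i = j)%N by rewrite addnK.
have e2 : (n - i - j = n - (j + i))%N by rewrite subnDA subnAC.
rewrite e1 in H2. rewrite e2 in H4.
set r := (n - (j + i))`!%N in pos H1 H4 *.
have -> : ('C(n, j + i) * 'C(j + i, i) * (i`! * j`! * r) =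
   'C(n, j + i) * ('C(j + i, i) * (i`! * j`!) * r))%N by ring.
rewrite H2 H1.
have -> : ('C(n, i) * 'C(n - i, j) * (i`! * j`! * r) =
   'C(n, i) * (i`! * ('C(n - i, j) * (j`! * r))))%N by ring.
by rewrite H4 H3.
Qed.

Lemma convC {K : fieldType} (A B : nat -> K) n : conv A B n = conv B A n.
Proof.
rewrite /conv (reindex_inj rev_ord_inj) /=.
apply: eq_bigr => i _.
have hi : (i <= n)%N by rewrite -ltnS.
rewrite subSS. rewrite subKn // bin_sub //; ring.
Qed.

Lemma tri_sum {K : fieldType} (G : nat -> nat -> K) n :
  \sum_(k < n.+1) \sum_(i < k.+1) G k i =
  \sum_(i < n.+1) \sum_(j < (n - i).+1) G (i + j)%N i.
Proof.
elim: n => [|n IH].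
  by rewrite !big_ord_recr !big_ord0 /= !add0r.
rewrite big_ord_recr /= IH [RHS]big_ord_recr /= subnn.
rewrite big_ord1 addn0.
have -> : \sum_(i < n.+1) \sum_(j < (n.+1 - widen_ord (leqnSn n.+1) i).+1)
      G (widen_ord (leqnSn n.+1) i + j)%N (widen_ord (leqnSn n.+1) i) =
   \sum_(i < n.+1) (\sum_(j < (n - i).+1) G (i + j)%N i + G n.+1 i).
  apply: eq_bigr => i _ /=.
  have hi : (i <= n)%N by rewrite -ltnS.
  rewrite subSn // big_ord_recr /=; congr (_ + _).
  by rewrite addnS subnKC.
rewrite big_split /= -addrA; congr (_ + _).
by rewrite big_ord_recr.
Qed.

Lemma convA {K : fieldType} (A B C : nat -> K) n :
  conv (conv A B) C n = conv A (conv B C) n.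
Proof.
rewrite /conv.
transitivity (\sum_(k < n.+1) \sum_(i < k.+1)
   ('C(n, k)%:R * 'C(k, i)%:R * A i * B (k - i)%N * C (n - k)%N)).
  apply: eq_bigr => k _; rewrite mulr_sumr mulr_suml; apply: eq_bigr => i _; ring.
rewrite (tri_sum (fun k i => 'C(n, k)%:R * 'C(k, i)%:R * A i * B (k - i)%N * C (n - k)%N)); apply: eq_bigr => i _.
rewrite mulr_sumr; apply: eq_bigr => j _.
have hi : (i <= n)%N by rewrite -ltnS.
have hj : (j <= n - i)%N by rewrite -ltnS.
have hji : (j + i <= n)%N by lia.
have e1 : (i + j - i = j)%N by lia.
have e2 : (n - (i + j) = n - i - j)%N by lia.
rewrite e1 e2 [(i + j)%N]addnC.
have := binC_aux hji => /(congr1 (fun m => m%:R : K)); rewrite !natrM => Hb.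
transitivity ('C(n, j + i)%:R * 'C(j + i, i)%:R * A i * B j * C (n - i - j)%N); first by [].
rewrite Hb; ring.
Qed.

Definition ex {K : fieldType} (x : K) (n : nat) : K := x ^+ n.
Definition DD {K : fieldType} (F : K) (n : nat) : K := ex F n + ex 0 n.

Lemma conv_ext {K : fieldType} (A A' B B' : nat -> K) n :
  (forall k, A k = A' k) -> (forall k, B k = B' k) -> conv A B n = conv A' B' n.
Proof. by move=> hA hB; apply: eq_bigr => k _; rewrite hA hB. Qed.

Lemma conv_sumL {K : fieldType} (I : Type) (r : seq I) (c : I -> K)
  (F : I -> nat -> K) (B : nat -> K) n :
  conv (fun k => \sum_(j <- r) c j * F j k) B n = \sum_(j <- r) c j * conv (F j) B n.
Proof.
rewrite /conv.
under eq_bigr => k _ do rewrite mulr_sumr mulr_suml.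
rewrite exchange_big /=; apply: eq_bigr => j _.
rewrite mulr_sumr; apply: eq_bigr => k _; ring.
Qed.

Lemma conv_sumR {K : fieldType} (I : Type) (r : seq I) (c : I -> K)
  (F : I -> nat -> K) (B : nat -> K) n :
  conv B (fun k => \sum_(j <- r) c j * F j k) n = \sum_(j <- r) c j * conv B (F j) n.
Proof.
rewrite convC conv_sumL; apply: eq_bigr => j _; by rewrite convC.
Qed.

Lemma conv_ex {K : fieldType} (x y : K) n : conv (ex x) (ex y) n = ex (x + y) n.
Proof.
rewrite /ex /conv addrC exprDn; apply: eq_bigr => k _.
rewrite -mulr_natl; ring.
Qed.

Lemma conv_ex0 {K : fieldType} (A : nat -> K) n : conv A (ex 0) n = A n.
Proof.
rewrite /conv big_ord_recr /= subnn /ex expr0 binn mul1r mulr1 big1 ?add0r //.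
move=> k _; have hk : (0 < n - k)%N by rewrite subn_gt0.
by rewrite expr0n (gtn_eqF hk) mulr0.
Qed.

Lemma conv_inj {K : fieldType} (D X Y : nat -> K) :
  D 0%N != 0 -> (forall n, conv X D n = conv Y D n) -> forall n, X n = Y n.
Proof.
move=> hD h n; elim: n {-2}n (leqnn n) => [|N IH] n hn.
  move: hn; rewrite leqn0 => /eqP ->.
  have := h 0%N; rewrite /conv !big_ord1 /= !bin0 !mul1r => /mulIf; apply; exact: hD.
have := h n; rewrite /conv !big_ord_recr /= subnn !binn.
rewrite (eq_bigr (fun k : 'I_n => 'C(n, k)%:R * Y k * D (n - k)%N)).
  by move/addrI; rewrite !mul1r => /mulIf; apply.
move=> k _; rewrite IH //.
have := ltn_ord k; lia.
Qed.


Lemma gel_size {K : fieldType} f (psi : nat -> K) m : size (gen_euler_list f psi m) = m.+1.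
Proof. by elim: m => [|m IH] //=; rewrite size_rcons IH. Qed.

Lemma gel_prefix {K : fieldType} f (psi : nat -> K) m k : (k <= m)%N ->
  (gen_euler_list f psi m)`_k = gen_euler f psi k.
Proof.
elim: m => [|m IH] hk.
  by move: hk; rewrite leqn0 => /eqP ->.
rewrite leq_eqVlt in hk; case/orP: hk => [/eqP -> //|hk].
rewrite /= nth_rcons gel_size hk; exact: IH.
Qed.

Lemma gen_euler_S {K : fieldType} f (psi : nat -> K) m :
  gen_euler f psi m.+1 = euler_rhs f psi m.+1 -
     2^-1 * \sum_(k < m.+1) 'C(m.+1, k)%:R * f%:R ^+ (m.+1 - k) * gen_euler f psi k.
Proof.
rewrite /gen_euler /= nth_rcons gel_size ltnn eqxx; congr (_ - 2^-1 * _).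
apply: eq_bigr => k _; rewrite gel_prefix //; rewrite -ltnS; exact: ltn_ord.
Qed.

Lemma euler_rec {K : fieldType} f (psi : nat -> K) n : (2:K) != 0 ->
  conv (gen_euler f psi) (DD f%:R) n = 2 * euler_rhs f psi n.
Proof.
move=> h2; rewrite /conv /DD /ex big_ord_recr /= subnn !expr0 binn mul1r.
case: n => [|m].
  by rewrite big_ord0 add0r /gen_euler /=; ring.
rewrite gen_euler_S.
under eq_bigr => k _ do rewrite expr0n subn_eq0 leqNgt ltn_ord /= addr0.
set S := \sum_(k < m.+1) _.
set T := \sum_(k < m.+1) _.
have -> : S = T by apply: eq_bigr => k _; ring.
field; done.
Qed.

Lemma conv_addR {K : fieldType} (A B C : nat -> K) n :
  conv A (fun k => B k + C k) n = conv A B n + conv A C n.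
Proof. by rewrite /conv -big_split; apply: eq_bigr => k _ /=; ring. Qed.

Lemma conv_scaleL {K : fieldType} (c : K) (A B : nat -> K) n :
  conv (fun k => c * A k) B n = c * conv A B n.
Proof. by rewrite /conv mulr_sumr; apply: eq_bigr => k _ /=; ring. Qed.

Lemma split_sum {K : fieldType} g m (h : nat -> K) :
  \sum_(1 <= a < (g * m).+1) h a = \sum_(j < m) \sum_(1 <= b < g.+1) h (b + g * j)%N.
Proof.
elim: m => [|m IH].
  by rewrite muln0 big_ord0 big_geq.
rewrite big_ord_recr /= -IH.
rewrite (@big_cat_nat _ _ _ (g * m).+1) //=; last by rewrite ltnS leq_mul2l leqnSn orbT.
congr (_ + _).
have -> : (g * m).+1 = (1 + g * m)%N by rewrite add1n.
rewrite big_addn.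
by have -> : ((g * m.+1).+1 - g * m = g.+1)%N by rewrite mulnS; lia.
Qed.

Lemma periodic_add {K : fieldType} (psi : nat -> K) g :
  (forall a, psi (a + g)%N = psi a) -> forall b j, psi (b + g * j)%N = psi b.
Proof.
move=> h b; elim=> [|j IH]; first by rewrite muln0 addn0.
by rewrite mulnS addnCA addnC h IH.
Qed.

Lemma sign_odd_mul {K : fieldType} g j : odd g -> (-1 : K) ^+ (g * j) = (-1) ^+ j.
Proof.
move=> hg; rewrite exprM; congr (_ ^+ _).
by rewrite -signr_odd hg expr1.
Qed.

Definition TT {K : fieldType} (g m : nat) (n : nat) : K :=
  \sum_(j < m) (-1) ^+ j * ex ((g * j)%:R) n.

Lemma rhs_mul {K : fieldType} g m (psi : nat -> K) n :
  odd g -> (forall a, psi (a + g)%N = psi a) ->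
  euler_rhs (g * m) psi n = conv (TT g m) (euler_rhs g psi) n.
Proof.
move=> hg hp.
rewrite /TT conv_sumL /euler_rhs split_sum; apply: eq_bigr => j _.
have -> : conv (ex (g * j)%:R)
   (fun k => \sum_(1 <= a < g.+1) (-1) ^+ a * psi a * a%:R ^+ k) n =
   conv (ex (g * j)%:R)
   (fun k => \sum_(1 <= a < g.+1) ((-1) ^+ a * psi a) * ex a%:R k) n.
  by apply: conv_ext => // k.
rewrite conv_sumR mulr_sumr; apply: eq_bigr => b _.
rewrite conv_ex /ex exprD (periodic_add hp) sign_odd_mul // natrD [(b%:R + _)]addrC.
set u := (-1) ^+ b; set w := (-1) ^+ j; set z := (_ + _) ^+ n; ring.
Qed.

Lemma telesc {K : fieldType} (y : nat -> K) m :
  \sum_(j < m) (-1) ^+ j * (y j.+1 + y j) = y 0%N - (-1) ^+ m * y m.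
Proof.
elim: m => [|m IH]; first by rewrite big_ord0 expr0 mul1r subrr.
by rewrite big_ord_recr /= IH exprS; ring.
Qed.

Lemma DD_mul {K : fieldType} g m n : odd m ->
  DD ((g * m)%:R : K) n = conv (TT g m) (DD g%:R) n.
Proof.
move=> hm; rewrite /TT conv_sumL.
rewrite (eq_bigr (fun j : 'I_m => (-1) ^+ j * (ex ((g * j.+1)%:R : K) n + ex ((g * j)%:R : K) n))); last first.
  move=> j _; rewrite /DD conv_addR !conv_ex addr0 -natrD mulnS addnC //.
rewrite (telesc (fun j => ex ((g * j)%:R : K) n)) /DD muln0 -signr_odd hm /=.
rewrite addrC; ring.
Qed.

Lemma euler_dist {K : fieldType} g m (psi : nat -> K) n :
  odd g -> odd m -> (2:K) != 0 -> (forall a, psi (a + g)%N = psi a) ->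
  conv (gen_euler g psi) (DD (g * m)%:R) n = 2 * euler_rhs (g * m) psi n.
Proof.
move=> hg hm h2 hp.
rewrite (rhs_mul m n hg hp).
transitivity (conv (gen_euler g psi) (conv (DD g%:R) (TT g m)) n).
  by apply: conv_ext => // k; rewrite DD_mul // convC.
rewrite -convA.
transitivity (conv (fun k => 2 * euler_rhs g psi k) (TT g m) n).
  by apply: conv_ext => // k; rewrite euler_rec.
by rewrite conv_scaleL convC.
Qed.

Definition ehat {K : fieldType} : nat -> K := gen_euler 1 (fun _ => -1).
Definition ee {K : fieldType} (n : nat) : K := conv (ex (-1)) ehat n.

Lemma conv_scaleR {K : fieldType} (c : K) (A B : nat -> K) n :
  conv A (fun k => c * B k) n = c * conv A B n.
Proof. by rewrite convC conv_scaleL convC. Qed.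

Lemma ee_rec {K : fieldType} n : (2:K) != 0 -> conv ee (DD (1%:R : K)) n = 2 * ex 0 n.
Proof.
move=> h2; rewrite /ee convA.
transitivity (conv (ex (-1)) (fun k => 2 * ex (1 : K) k) n).
  apply: conv_ext => // k; rewrite euler_rec // /euler_rhs big_nat1 /ex expr1n.
  ring.
by rewrite (conv_scaleR 2 (ex (-1)) (ex 1)) conv_ex addNr.
Qed.

Lemma sig_rec {K : fieldType} (F : K) n : (2:K) != 0 ->
  conv (fun k => F ^+ k * ee k) (DD F) n = 2 * ex 0 n.
Proof.
move=> h2.
transitivity (F ^+ n * conv ee (DD (1%:R : K)) n); last first.
  rewrite ee_rec // /ex; case: n => [|n]; first by rewrite expr0 mul1r.
  by rewrite expr0n /= !mulr0.
rewrite /conv mulr_sumr; apply: eq_bigr => k _ /=.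
have hk : (k <= n)%N by rewrite -ltnS.
rewrite /DD /ex expr1n.
case: (eqVneq (n - k)%N 0%N) => [e|ne].
  have -> : k = n :> nat by lia.
  by rewrite subnn !expr0; ring.
rewrite expr0n (negbTE ne) !addr0 mulr1.
have -> : F ^+ n = F ^+ k * F ^+ (n - k) by rewrite -exprD subnKC.
set a := F ^+ k; set b := F ^+ (n - k); ring.
Qed.

Definition CF {K : fieldType} (F : nat) (psi : nat -> K) (n : nat) : K :=
  conv (euler_rhs F psi) (fun k => F%:R ^+ k * ee k) n.

Lemma CF_rec {K : fieldType} F (psi : nat -> K) n : (2:K) != 0 ->
  conv (CF F psi) (DD F%:R) n = 2 * euler_rhs F psi n.
Proof.
move=> h2; rewrite /CF convA.
transitivity (conv (euler_rhs F psi) (fun k => 2 * ex 0 k) n).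
  by apply: conv_ext => // k; rewrite sig_rec.
by rewrite (conv_scaleR 2 (euler_rhs F psi) (ex 0)) conv_ex0.
Qed.

Lemma gen_euler_CF {K : fieldType} g m (psi : nat -> K) n :
  odd g -> odd m -> (2:K) != 0 -> (forall a, psi (a + g)%N = psi a) ->
  gen_euler g psi n = CF (g * m) psi n.
Proof.
move=> hg hm h2 hp.
apply: (@conv_inj _ (DD (g * m)%:R)) => [|k].
  by rewrite /DD /ex !expr0.
by rewrite euler_dist // CF_rec.
Qed.

Definition psip {K : fieldType} (p : nat) (psi : nat -> K) (a : nat) : K :=
  if (p %| a)%N then 0 else psi a.

Lemma rhs_euler_factor {K : fieldType} p F1 (psi : nat -> K) k :
  odd p -> (1 < p)%N -> (forall a b, psi (a * b)%N = psi a * psi b) ->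
  euler_rhs (p * F1) psi k - psi p * p%:R ^+ k * euler_rhs F1 psi k =
  euler_rhs (p * F1) (psip p psi) k.
Proof.
move=> hp hp1 hm.
rewrite /euler_rhs !split_sum.
have -> : \sum_(1 <= a < F1.+1) (-1) ^+ a * psi a * a%:R ^+ k =
          \sum_(j < F1) (-1) ^+ j.+1 * psi j.+1 * j.+1%:R ^+ k.
  rewrite -(big_mkord xpredT (fun j => (-1) ^+ j.+1 * psi j.+1 * j.+1%:R ^+ k)).
  by rewrite big_add1.
rewrite mulr_sumr -sumrB; apply: eq_bigr => j _.
have hp0 : (0 < p)%N by lia.
rewrite !big_nat_recr //=.
have -> : \sum_(1 <= i < p) (-1) ^+ (i + p * j)%N * psip p psi (i + p * j)%N * (i + p * j)%:R ^+ k =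
          \sum_(1 <= i < p) (-1) ^+ (i + p * j)%N * psi (i + p * j)%N * (i + p * j)%:R ^+ k.
  rewrite big_nat_cond [RHS]big_nat_cond; apply: eq_bigr => i /andP[/andP[h1 h2] _].
  rewrite /psip.
  have -> : (p %| i + p * j)%N = false.
    have hpd : ~~ (p %| i)%N by apply/negP => hd; have := dvdn_leq h1 hd; lia.
    by rewrite (dvdn_addl i (dvdn_mulr j (dvdnn p))) (negbTE hpd).
  done.
have -> : psip p psi (p + p * j)%N = 0 by rewrite /psip dvdn_add ?dvdn_mulr.
rewrite mulr0 mul0r addr0.
have e : (p + p * j = p * j.+1)%N by rewrite mulnS.
rewrite e sign_odd_mul // hm natrM exprMn.
set s := \sum_(1 <= i < p) _.
set u := (-1) ^+ j.+1; set w := p%:R ^+ k; set z := j.+1%:R ^+ k.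
ring.
Qed.

Lemma eps_closed {K : fieldType} p g m (psi : nat -> K) i :
  odd p -> (1 < p)%N -> odd g -> odd m -> (2:K) != 0 ->
  (forall a, psi (a + g)%N = psi a) -> (forall a b, psi (a * b)%N = psi a * psi b) ->
  eps_char p g psi i = CF (p * (g * m)) (psip p psi) i.
Proof.
move=> hp hp1 hg hm h2 hper hmul.
rewrite /eps_char mulrBl mul1r.
rewrite {1}(gen_euler_CF i hg (_ : odd (p * m)) h2 hper); last by rewrite oddM hp hm.
rewrite (gen_euler_CF i hg hm h2 hper) mulnCA.
rewrite /CF /conv mulr_sumr -sumrB; apply: eq_bigr => k _.
rewrite -rhs_euler_factor //.
have hk : (k <= i)%N by rewrite -ltnS.
have -> : p%:R ^+ i = (p%:R ^+ k * p%:R ^+ (i - k)) :> K by rewrite -exprD subnKC.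
rewrite natrM exprMn.
set a := euler_rhs _ _ _; set b := euler_rhs _ _ _.
set c := p%:R ^+ k; set d := p%:R ^+ (i - k); set x := ((g * m)%:R) ^+ (i - k).
ring.
Qed.

Lemma v_ge0 {R : realFieldType} {K : fieldType} p (v : K -> R) (hv : padic_abs p v) x : 0 <= v x.
Proof. by case: hv. Qed.

Lemma vM {R : realFieldType} {K : fieldType} p (v : K -> R) (hv : padic_abs p v) x y :
  v (x * y) = v x * v y.
Proof. by case: hv. Qed.

Lemma v0 {R : realFieldType} {K : fieldType} p (v : K -> R) (hv : padic_abs p v) : v 0 = 0.
Proof. by case: hv => _ h _ _ _; apply/eqP; rewrite h. Qed.

Lemma v_eq0 {R : realFieldType} {K : fieldType} p (v : K -> R) (hv : padic_abs p v) x :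
  (v x == 0) = (x == 0).
Proof. by case: hv. Qed.

Lemma v1 {R : realFieldType} {K : fieldType} p (v : K -> R) (hv : padic_abs p v) : v 1 = 1.
Proof.
have h := vM hv 1 1; rewrite mulr1 in h.
have hn : v 1 != 0 by rewrite (v_eq0 hv) oner_eq0.
by apply: (mulIf hn); rewrite mul1r -h.
Qed.

Lemma vN1 {R : realFieldType} {K : fieldType} p (v : K -> R) (hv : padic_abs p v) : v (-1) = 1.
Proof.
have h := vM hv (-1) (-1); rewrite mulrNN mulr1 (v1 hv) in h.
have h0 := v_ge0 hv (-1).
apply/eqP; rewrite -(@pexpr_eq1 _ _ 2) // expr2 -h //.
Qed.

Lemma vN {R : realFieldType} {K : fieldType} p (v : K -> R) (hv : padic_abs p v) x : v (- x) = v x.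
Proof. by rewrite -mulN1r (vM hv) (vN1 hv) mul1r. Qed.

Lemma vD_le {R : realFieldType} {K : fieldType} p (v : K -> R) (hv : padic_abs p v) x y B :
  v x <= B -> v y <= B -> v (x + y) <= B.
Proof.
case: hv => _ _ _ hu _ hx hy; apply: le_trans (hu x y) _.
by rewrite ge_max hx hy.
Qed.

Lemma vsum_le {R : realFieldType} {K : fieldType} p (v : K -> R) (hv : padic_abs p v)
  (I : Type) (r : seq I) (P : pred I) (G : I -> K) B :
  0 <= B -> (forall i, P i -> v (G i) <= B) -> v (\sum_(i <- r | P i) G i) <= B.
Proof.
move=> hB hG; elim/big_ind: _ => //.
- by rewrite (v0 hv).
- by move=> x y; apply: (vD_le hv).
Qed.

Lemma vM_le {R : realFieldType} {K : fieldType} p (v : K -> R) (hv : padic_abs p v) x y B :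
  v x <= 1 -> v y <= B -> v (x * y) <= B.
Proof.
move=> hx hy; rewrite (vM hv).
have h0 := v_ge0 hv y; have h1 := v_ge0 hv x.
apply: le_trans hy; rewrite -[X in _ <= X]mul1r; apply: ler_wpM2r => //.
Qed.

Lemma vnat_le1 {R : realFieldType} {K : fieldType} p (v : K -> R) (hv : padic_abs p v) n :
  v n%:R <= 1.
Proof.
elim: n => [|n IH]; first by rewrite (v0 hv) ler01.
by rewrite -addn1 natrD (vD_le hv) // (v1 hv).
Qed.

Lemma vX {R : realFieldType} {K : fieldType} p (v : K -> R) (hv : padic_abs p v) x n :
  v (x ^+ n) = v x ^+ n.
Proof.
elim: n => [|n IH]; first by rewrite !expr0 (v1 hv).
by rewrite !exprS (vM hv) IH.
Qed.

Lemma vX_le1 {R : realFieldType} {K : fieldType} p (v : K -> R) (hv : padic_abs p v) x n :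
  v x <= 1 -> v (x ^+ n) <= 1.
Proof. by move=> h; rewrite (vX hv) exprn_ile1 // (v_ge0 hv). Qed.

Lemma vX_le {R : realFieldType} {K : fieldType} p (v : K -> R) (hv : padic_abs p v) x n :
  v x <= 1 -> (0 < n)%N -> v (x ^+ n) <= v x.
Proof.
move=> h hn; case: n hn => // n _; rewrite exprSr (vM hv).
rewrite -[X in _ <= X]mul1r ler_wpM2r ?(v_ge0 hv) //.
by rewrite (vX hv) exprn_ile1 // (v_ge0 hv).
Qed.

Lemma vV {R : realFieldType} {K : fieldType} p (v : K -> R) (hv : padic_abs p v) x :
  v (x^-1) = (v x)^-1.
Proof.
have [->|hx] := eqVneq x 0; first by rewrite invr0 (v0 hv) invr0.
have h := vM hv x x^-1; rewrite mulfV // (v1 hv) in h.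
have hvx : v x != 0 by rewrite (v_eq0 hv).
by apply: (mulfI hvx); rewrite -h mulfV.
Qed.

Lemma v_strict {R : realFieldType} {K : fieldType} p (v : K -> R) (hv : padic_abs p v) x y :
  v y < v x -> v (x + y) = v x.
Proof.
move=> hlt; case: (hv) => _ _ _ hu _.
apply/le_anti/andP; split.
  by apply: le_trans (hu x y) _; rewrite ge_max lexx ltW.
have := hu (x + y) (- y); rewrite addrK (vN hv).
rewrite le_max => /orP[//|h]; by move: (lt_le_trans hlt h); rewrite ltxx.
Qed.

Lemma dc_periodic {K : fieldType} m (chi : nat -> K) : dirichlet_char m chi ->
  forall a k, chi (a + m * k)%N = chi a.
Proof.
case=> _ hp _ _ _ a; elim=> [|k IH]; first by rewrite muln0 addn0.
by rewrite mulnS addnCA addnC hp IH.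
Qed.

Lemma dc_mod {K : fieldType} m (chi : nat -> K) : dirichlet_char m chi ->
  forall a b, a = b %[mod m] -> chi a = chi b.
Proof.
move=> hc a b e.
rewrite (divn_eq a m) (divn_eq b m) e addnC mulnC (dc_periodic hc).
by rewrite addnC mulnC (dc_periodic hc).
Qed.

Lemma dc_exp {K : fieldType} m (chi : nat -> K) : dirichlet_char m chi ->
  forall a k, chi (a ^ k)%N = chi a ^+ k.
Proof.
case=> _ _ hm h1 _ a; elim=> [|k IH]; first by rewrite expn0 expr0.
by rewrite expnS exprS hm IH.
Qed.

Lemma dc_tot {K : fieldType} m (chi : nat -> K) : dirichlet_char m chi ->
  forall a, coprime a m -> chi a ^+ totient m = 1.
Proof.
move=> hc a ha; rewrite -(dc_exp hc).
have := Euler_exp_totient ha => /(dc_mod hc) ->.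
by case: hc.
Qed.

Lemma dc_v {R : realFieldType} {K : fieldType} p (v : K -> R) (hv : padic_abs p v)
  m (chi : nat -> K) : dirichlet_char m chi -> forall a, coprime a m -> v (chi a) = 1.
Proof.
move=> hc a ha; have := dc_tot hc ha => /(congr1 v); rewrite (vX hv) (v1 hv) => h.
apply/eqP; rewrite -(@pexpr_eq1 _ _ (totient m)) ?h ?(v_ge0 hv) //.
by rewrite totient_gt0; case: hc.
Qed.

Lemma dc_vle {R : realFieldType} {K : fieldType} p (v : K -> R) (hv : padic_abs p v)
  m (chi : nat -> K) : dirichlet_char m chi -> forall a, v (chi a) <= 1.
Proof.
move=> hc a; case: (boolP (coprime a m)) => h; first by rewrite (dc_v hv hc).
have : chi a == 0 by case: hc => _ _ _ _ ->.
by move/eqP ->; rewrite (v0 hv) ler01.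
Qed.

Lemma vp_pos {R : realFieldType} {K : fieldType} p (v : K -> R) (hv : padic_abs p v) :
  prime p -> p%:R^-1 < (1 : R).
Proof.
move=> hp; have hp1 : (1 < p)%N by apply: prime_gt1.
rewrite invf_lt1 ?ltr1n // ltr0n; lia.
Qed.

Lemma vnat_coprime {R : realFieldType} {K : fieldType} p (v : K -> R) (hv : padic_abs p v) m :
  prime p -> ~~ (p %| m)%N -> v m%:R = 1.
Proof.
move=> hp hm.
have hp1 : (1 < p)%N by apply: prime_gt1.
have hcop : coprime m p by rewrite coprime_sym prime_coprime.
have := Euler_exp_totient hcop; rewrite totient_prime // (modn_small hp1) => e.
have hdiv := divn_eq (m ^ p.-1) p; rewrite e in hdiv.
set q := (m ^ p.-1 %/ p)%N in hdiv.
have hK : (1 : K) = m%:R ^+ p.-1 - (q * p)%:R.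
  by rewrite -natrX hdiv natrD addrC addKr.
have hvq : v ((q * p)%:R : K) <= p%:R^-1.
  rewrite natrM (vM hv); case: (hv) => _ _ _ _ ->.
  rewrite -[X in _ <= X]mul1r ler_wpM2r ?invr_ge0 ?ler0n //.
  exact: (vnat_le1 hv).
have hlt := vp_pos hv hp.
have hX : 1 <= v (m%:R ^+ p.-1 : K).
  rewrite leNgt; apply/negP => hX.
  have : v (1 : K) < 1.
    rewrite hK; case: (hv) => _ _ _ hu _; apply: le_lt_trans (hu _ _) _.
    by rewrite gt_max hX (vN hv) (le_lt_trans hvq hlt).
  by rewrite (v1 hv) ltxx.
have hle : v (m%:R ^+ p.-1 : K) <= 1 by apply: (vX_le1 hv); apply: (vnat_le1 hv).
have he : v (m%:R : K) ^+ p.-1 = 1 by rewrite -(vX hv); apply/le_anti; rewrite hX hle.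
apply/eqP; rewrite -(@pexpr_eq1 _ _ p.-1) ?he ?(v_ge0 hv) //; lia.
Qed.

Lemma vdiff_pow {R : realFieldType} {K : fieldType} p (v : K -> R) (hv : padic_abs p v)
  (x y : K) j : v x <= 1 -> v y <= 1 -> v (x ^+ j - y ^+ j) <= v (x - y).
Proof.
move=> hx hy; rewrite subrXX mulrC; apply: (vM_le hv) => //.
apply: (vsum_le hv) => [|i _]; first exact: ler01.
rewrite (vM hv); apply: mulr_ile1; rewrite ?(v_ge0 hv) //; exact: (vX_le1 hv).
Qed.

Lemma teich_close {R : realFieldType} {K : fieldType} p (v : K -> R) (hv : padic_abs p v)
  (omega : nat -> K) a :
  prime p -> teichmuller p v omega -> ~~ (p %| a)%N -> v (omega a - a%:R) <= p%:R^-1.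
Proof.
move=> hp [hc hcl] ha.
have hp1 : (1 < p)%N by apply: prime_gt1.
have hcop : coprime a p by rewrite coprime_sym prime_coprime.
set x := omega a; set y := (a%:R : K); set N := p.-1.
have hxN : x ^+ N = 1 by rewrite /N -totient_prime //; apply: (dc_tot hc).
have := Euler_exp_totient hcop; rewrite totient_prime // (modn_small hp1) => e.
have hdiv := divn_eq (a ^ p.-1) p; rewrite e in hdiv.
set q := (a ^ p.-1 %/ p)%N in hdiv.
have hyN : y ^+ N = (q * p)%:R + 1 by rewrite /y -natrX hdiv natrD.
have hD : v (x ^+ N - y ^+ N) <= p%:R^-1.
  rewrite hxN hyN opprD addrCA subrr addr0 (vN hv) natrM (vM hv).
  case: (hv) => _ _ _ _ ->.
  rewrite -[X in _ <= X]mul1r ler_wpM2r ?invr_ge0 ?ler0n //.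
  exact: (vnat_le1 hv).
have hx1 : v x <= 1 by apply: (dc_vle hv hc).
have hy1 : v y <= 1 by apply: (vnat_le1 hv).
have hd1 : v (x - y) < 1 by apply: hcl.
move: hD; rewrite subrXX.
set S := \sum_(i < N) _.
have hS : v S = 1.
  have -> : S = N%:R * y ^+ N.-1 + \sum_(i < N) (x ^+ (N.-1 - i) - y ^+ (N.-1 - i)) * y ^+ i.
    rewrite /S.
    have -> : N%:R * y ^+ N.-1 = \sum_(i < N) y ^+ (N.-1 - i) * y ^+ i.
      transitivity (\sum_(i < N) y ^+ N.-1); last first.
        apply: eq_bigr => i _; rewrite -exprD subnK //; have := ltn_ord i; lia.
      by rewrite sumr_const card_ord mulr_natl.
    rewrite -big_split; apply: eq_bigr => i _ /=; ring.
  rewrite (v_strict hv).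
    rewrite (vM hv) (vX hv) /y !(vnat_coprime hv) // ?expr1n ?mulr1 //.
    apply/negP => hd; have := dvdn_leq _ hd; rewrite /N; lia.
  rewrite (vM hv) (vX hv) /y !(vnat_coprime hv) // ?expr1n ?mulr1 //; last first.
    apply/negP => hd; have := dvdn_leq _ hd; rewrite /N; lia.
  apply: le_lt_trans hd1.
  apply: (vsum_le hv) => [|i _]; first exact: (v_ge0 hv).
  rewrite mulrC; apply: (vM_le hv); first exact: (vX_le1 hv).
  exact: (vdiff_pow hv).
by rewrite (vM hv) hS mulr1.
Qed.

Lemma modT m d x y : (x = y %[mod m])%N -> (d %| m)%N -> (x = y %[mod d])%N.
Proof. by move=> e hd; rewrite -(modn_dvdm x hd) e (modn_dvdm y hd). Qed.

Lemma chin_zero {K : fieldType} (p f fn : nat) (chi omega chin : nat -> K) i a :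
  prime p -> primitive_char f chi -> dirichlet_char p omega -> dirichlet_char fn chin ->
  (fn %| lcmn f p)%N ->
  (forall b, coprime b (lcmn f p) -> chin b = chi b * (omega b ^+ i)^-1) ->
  ~~ (p %| a)%N -> ~~ coprime a f -> chin a = 0.
Proof.
move=> hp [hcf hprim] hom hcn hfn hrel hpa hnc.
have hf0 : (0 < f)%N by case: hcf.
have hp1 : (1 < p)%N by apply: prime_gt1.
apply/eqP; case: (hcn) => _ _ _ _ ->; apply/negP => hcop.
set d := gcdn a f.
have hd0 : (0 < d)%N by rewrite gcdn_gt0 hf0 orbT.
have hd1 : (1 < d)%N by move: hnc; rewrite /coprime -/d; lia.
set q := pdiv d.
have hq : prime q by apply: pdiv_prime.
have hqd : (q %| d)%N by apply: pdiv_dvd.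
have hqa : (q %| a)%N by apply: dvdn_trans hqd (dvdn_gcdl _ _).
have hqf : (q %| f)%N by apply: dvdn_trans hqd (dvdn_gcdr _ _).
have hqp : q != p by apply: contraNneq hpa => <-.
have hqfn : ~~ (q %| fn)%N.
  apply/negP => h; have : (q %| gcdn a fn)%N by rewrite dvdn_gcd hqa h.
  by rewrite (eqP hcop) dvdn1 => /eqP e; move: hq; rewrite e.
have [f' hqf' ef] := pfactor_coprime hq hf0.
set e := logn q f in ef.
have he0 : (0 < e)%N.
  case: (posnP e) => // e0; move: hqf'; rewrite prime_coprime //.
  by move: hqf; rewrite ef e0 expn0 muln1 => ->.
set D := (f %/ q)%N.
have hq1 : (1 < q)%N by apply: prime_gt1.
have hDq : (D * q = f)%N by rewrite divnK.
have hDf : (D %| f)%N by rewrite -hDq dvdn_mulr.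
have hD0 : (0 < D)%N by move: hf0; rewrite -hDq muln_gt0 => /andP[].
have hDlt : (D < f)%N by rewrite -hDq ltn_Pmulr.
have [a0 [b0 [ha0 hb0 hab hne]]] := hprim D hDf hDlt.
have hf'D : (f' %| D)%N.
  rewrite /D dvdn_divRL // ef; apply: dvdn_mul => //.
  by rewrite -(prednK he0) expnS dvdn_mulr.
pose b1 := if (p %| b0)%N then (b0 + f)%N else b0.
have hb1f : (b1 = b0 %[mod f])%N by rewrite /b1; case: ifP => // _; rewrite modnDr.
have hb1p : ~~ (p %| b1)%N.
  rewrite /b1; case: ifPn => // hpb.
  have hpf : ~~ (p %| f)%N.
    apply/negP => h; have : (p %| gcdn b0 f)%N by rewrite dvdn_gcd hpb h.
    by rewrite (eqP hb0) dvdn1 => /eqP e1; move: hp; rewrite e1.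
  by rewrite dvdn_addr.
have hb1cf : coprime b1 f by rewrite -coprime_modl hb1f coprime_modl.
have hchib : chi b1 = chi b0 by apply: (dc_mod hcf).
set G := (f' * (fn * p))%N.
have hqG : coprime (q ^ e) G.
  rewrite coprime_pexpl // !coprimeMr hqf' !prime_coprime // hqfn /=.
  by rewrite dvdn_prime2 // hqp.
set y := chinese (q ^ e) G a0 b1.
have hy1 : (y = a0 %[mod q ^ e])%N by apply: chinese_modl.
have hy2 : (y = b1 %[mod G])%N by apply: chinese_modr.
have hyf : (y = a0 %[mod f])%N.
  apply/eqP; rewrite ef mulnC chinese_remainder; last by rewrite coprime_pexpl.
  rewrite hy1 eqxx /=; apply/eqP.
  rewrite (modT hy2 (dvdn_mulr _ (dvdnn f'))) (modT hb1f (dvdn_trans hf'D hDf)).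
  by rewrite (modT hab hf'D).
have hyp : (y = b1 %[mod p])%N by apply: (modT hy2); rewrite /G dvdn_mull // dvdn_mull.
have hyfn : (y = b1 %[mod fn])%N by apply: (modT hy2); rewrite /G dvdn_mull // dvdn_mulr.
have hcL : forall z, coprime z f -> ~~ (p %| z)%N -> coprime z (lcmn f p).
  move=> z hz1 hz2; apply: (coprime_dvdr (m := lcmn f p) (n := (f * p)%N)).
    by rewrite dvdn_lcm dvdn_mulr // dvdn_mull.
  by rewrite coprimeMr hz1 coprime_sym prime_coprime.
have hycf : coprime y f by rewrite -coprime_modl hyf coprime_modl.
have hypp : ~~ (p %| y)%N.
  by rewrite /dvdn hyp.
have e1 := hrel y (hcL y hycf hypp).
have e2 := hrel b1 (hcL b1 hb1cf hb1p).
rewrite (dc_mod hcn hyfn) (dc_mod hom hyp) e2 in e1.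
have hom0 : (omega b1 ^+ i)^-1 != 0.
  rewrite invr_eq0 expf_eq0 negb_and; apply/orP; right.
  case: (hom) => _ _ _ _ ->; by rewrite negbK coprime_sym prime_coprime.
have := mulIf hom0 e1 => hcy.
apply: (negP hne); apply/eqP.
by rewrite -(dc_mod hcf hyf) -hcy hchib.
Qed.

Lemma v2inv {R : realFieldType} {K : fieldType} p (v : K -> R) (hv : padic_abs p v) :
  prime p -> odd p -> v (2^-1 : K) = 1.
Proof.
move=> hp ho; rewrite (vV hv) (vnat_coprime hv) ?invr1 //.
apply/negP => h; have := dvdn_leq (isT : (0 < 2)%N) h; have := prime_gt1 hp.
move=> h1 h2; have e : p = 2%N by lia.
by move: ho; rewrite e.
Qed.

Lemma rhs_int {R : realFieldType} {K : fieldType} p (v : K -> R) (hv : padic_abs p v)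
  f (psi : nat -> K) k : (forall a, v (psi a) <= 1) -> v (euler_rhs f psi k) <= 1.
Proof.
move=> hpsi; apply: (vsum_le hv) => [|a _]; first exact: ler01.
rewrite -mulrA; apply: (vM_le hv); first by rewrite (vX hv) (vN1 hv) expr1n.
apply: (vM_le hv) => //; apply: (vX_le1 hv); exact: (vnat_le1 hv).
Qed.

Lemma gen_euler_int {R : realFieldType} {K : fieldType} p (v : K -> R) (hv : padic_abs p v)
  f (psi : nat -> K) : prime p -> odd p -> (forall a, v (psi a) <= 1) ->
  forall n, v (gen_euler f psi n) <= 1.
Proof.
move=> hp ho hpsi n; elim: n {-2}n (leqnn n) => [|N IH] n hn.
  move: hn; rewrite leqn0 => /eqP ->; exact: (rhs_int hv).
case: n hn => [_|m hm]; first exact: (rhs_int hv).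
rewrite gen_euler_S; apply: (vD_le hv); first exact: (rhs_int hv).
rewrite (vN hv); apply: (vM_le hv); first by rewrite (v2inv hv).
apply: (vsum_le hv) => [|k _]; first exact: ler01.
apply: (vM_le hv); first by apply: (vM_le hv); [exact: (vnat_le1 hv)| apply: (vX_le1 hv); exact: (vnat_le1 hv)].
apply: IH; have := ltn_ord k; lia.
Qed.

Lemma ee_int {R : realFieldType} {K : fieldType} p (v : K -> R) (hv : padic_abs p v) k :
  prime p -> odd p -> v (ee k : K) <= 1.
Proof.
move=> hp ho; apply: (vsum_le hv) => [|j _]; first exact: ler01.
rewrite -mulrA; apply: (vM_le hv); first exact: (vnat_le1 hv).
apply: (vM_le hv); first by rewrite (vX hv) (vN1 hv) expr1n.
apply: (gen_euler_int hv) => // a; by rewrite (vN hv) (v1 hv).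
Qed.

Lemma ee0 {K : fieldType} : ee 0 = (1 : K).
Proof.
rewrite /ee /conv big_ord1 /= /ehat /gen_euler /= /euler_rhs big_nat1 /ex.
by rewrite bin0; ring.
Qed.

Lemma odd_dvd d n : (d %| n)%N -> odd n -> odd d.
Proof. by move=> /dvdnP[k ->]; rewrite oddM => /andP[]. Qed.

Theorem lemma3p4 (R : realFieldType) (K : fieldType) (v : K -> R)
  (p f : nat) (chi omega : nat -> K) (chin : nat -> nat -> K) (fn : nat -> nat) :
  prime p -> odd p ->
  padic_abs p v ->
  teichmuller p v omega ->
  odd f -> primitive_char f chi ->
  (forall n, [/\ primitive_char (fn n) (chin n),
                 (fn n %| lcmn f p)%N
               & forall a, coprime a (lcmn f p) ->
                   chin n a = chi a * (omega a ^+ n)^-1]) ->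
  forall n : nat,
    v (\sum_(i < n.+1) 'C(n, i)%:R * (-1) ^+ (n - i) * eps_char p (fn i) (chin i) i)
      <= v (p%:R ^+ n).
Proof.
move=> hp hpo hv hT hfo hchi hn n.
have hp1 : (1 < p)%N by apply: prime_gt1.
have h2 : (2 : K) != 0.
  rewrite -(v_eq0 hv) (vnat_coprime hv) ?oner_eq0 //.
  apply/negP => h; have := dvdn_leq (isT : (0 < 2)%N) h => h3.
  have e : p = 2%N by lia.
  by move: hpo; rewrite e.
set L := lcmn f p.
have hLodd : odd L.
  apply: (@odd_dvd _ (f * p)%N); first by rewrite dvdn_lcm dvdn_mulr // dvdn_mull.
  by rewrite oddM hfo hpo.
set F := (p * (L * p ^ n))%N.
have heps : forall i, eps_char p (fn i) (chin i) i = CF F (psip p (chin i)) i.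
  move=> i; have [[hci _] hdiv _] := hn i.
  have hfn0 : (0 < fn i)%N by case: hci.
  set m := (L %/ fn i * p ^ n)%N.
  have e1 : (fn i * (L %/ fn i) = L)%N by rewrite mulnC divnK.
  have eF : F = (p * (fn i * m))%N by rewrite /F /m; rewrite [(fn i * _)%N]mulnA e1.
  rewrite eF; apply: eps_closed => //.
  - exact: (odd_dvd hdiv).
  - rewrite /m oddM oddX hpo orbT andbT.
    apply: (@odd_dvd _ L) => //; apply/dvdnP; exists (fn i); by rewrite e1.
  - by case: hci => _ hper _ _ _.
  - by case: hci => _ _ hmul _ _.
have hpsi : forall i a, psip p (chin i) a =
    if (p %| a)%N then 0 else chi a * (omega a ^+ i)^-1.
  move=> i a; rewrite /psip; case: ifPn => // hpa.
  have [[hci _] hdiv hrel] := hn i.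
  case: (boolP (coprime a f)) => hcf.
    apply: hrel; apply: (coprime_dvdr (n := (f * p)%N)).
      by rewrite dvdn_lcm dvdn_mulr // dvdn_mull.
    by rewrite coprimeMr hcf coprime_sym prime_coprime.
  have -> : chi a = 0 by apply/eqP; case: hchi => [[_ _ _ _ ->] _].
  rewrite mul0r; apply: (chin_zero hp hchi (proj1 hT) hci hdiv hrel hpa hcf).
have hdc : forall i, dirichlet_char (fn i) (chin i) by move=> i; case: (hn i) => [[]].
have hpsi1 : forall i a, v (psip p (chin i) a) <= 1.
  move=> i a; rewrite /psip; case: ifP => _; first by rewrite (v0 hv) ler01.
  exact: (dc_vle hv (hdc i)).
under eq_bigr => i _ do rewrite heps.
set B := v (p%:R ^+ n : K).
have hB0 : 0 <= B by apply: (v_ge0 hv).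
have hBe : B = (p%:R^-1) ^+ n by rewrite /B (vX hv); case: (hv) => _ _ _ _ ->.
have hvF : v (F%:R : K) <= B.
  rewrite /F mulnA natrM (vM hv) natrX.
  rewrite -[X in _ <= X]mul1r ler_wpM2r //; exact: (vnat_le1 hv).
pose A i := \sum_(k < i) 'C(i, k)%:R * euler_rhs F (psip p (chin i)) k *
     ((F%:R : K) ^+ (i - k)%N * ee (i - k)%N).
have hsplit : forall i, CF F (psip p (chin i)) i = A i + euler_rhs F (psip p (chin i)) i.
  by move=> i; rewrite /CF /conv big_ord_recr /= subnn expr0 ee0 binn !mulr1 mul1r.
under eq_bigr => j _ do rewrite hsplit mulrDr.
rewrite big_split /=; apply: (vD_le hv).
  apply: (vsum_le hv) => // i _.
  apply: (vM_le hv).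
    apply: (vM_le hv); first exact: (vnat_le1 hv).
    by rewrite (vX hv) (vN1 hv) expr1n.
  apply: (vsum_le hv) => // k _.
  apply: (vM_le hv).
    apply: (vM_le hv); first exact: (vnat_le1 hv).
    exact: (rhs_int hv).
  rewrite mulrC; apply: (vM_le hv); first exact: (ee_int hv).
  have hF1 : v (F%:R : K) <= 1.
    apply: (le_trans hvF); rewrite hBe; apply: exprn_ile1; first by rewrite invr_ge0 ler0n.
    exact: ltW (vp_pos hv hp).
  apply: (@le_trans _ _ (v (F%:R : K))); last exact: hvF.
  apply: (vX_le hv) => //; have := ltn_ord k; lia.
rewrite /euler_rhs.
under eq_bigr => i _ do rewrite mulr_sumr.
rewrite exchange_big /=.
apply: (vsum_le hv) => // a _.
case: (boolP (p %| a)%N) => hpa.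
  rewrite big1 ?(v0 hv) // => i _.
  by rewrite hpsi hpa mulr0 mul0r mulr0.
have hcap : coprime a p by rewrite coprime_sym prime_coprime.
set x := omega a.
have hx1 : v x = 1 by apply: (dc_v hv (proj1 hT)).
have hx0 : x != 0 by rewrite -(v_eq0 hv) hx1 oner_eq0.
set u := x^-1 * a%:R.
have -> : \sum_(i < n.+1) 'C(n, i)%:R * (-1) ^+ (n - i) *
        ((-1) ^+ a * psip p (chin i) a * a%:R ^+ i) =
   (-1) ^+ a * chi a * (-1 + u) ^+ n.
  rewrite exprDn mulr_sumr; apply: eq_bigr => i _.
  rewrite hpsi (negbTE hpa) /u exprMn exprVn -mulr_natl.
  set s1 := (-1) ^+ a; set s2 := (-1) ^+ (n - i); set w := (x ^+ i)^-1.
  set z := (a%:R : K) ^+ i; set c := ('C(n, i)%:R : K); ring.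
apply: (vM_le hv).
  apply: (vM_le hv); first by rewrite (vX hv) (vN1 hv) expr1n.
  exact: (dc_vle hv (proj1 hchi)).
have hu : v (-1 + u) <= p%:R^-1.
  have -> : -1 + u = x^-1 * (a%:R - x) by rewrite /u mulrBr mulVf // addrC.
  rewrite (vM hv) (vV hv) hx1 invr1 mul1r -opprB (vN hv).
  exact: (teich_close hv hp hT hpa).
rewrite (vX hv) hBe; apply: lerXn2r => //; rewrite nnegrE ?(v_ge0 hv) ?invr_ge0 ?ler0n //.
Qed.
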